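(* Let $(X,d)$ be a compact metric space and $f_{0,\infty}=\{f_n\}_{n=0}^\infty$ an equi-continuous sequence of continuous surjective self-maps of $X$. For $i\ge0$ let $f_{i,\infty}=\{f_n\}_{n=i}^\infty$. Then for any $A\in\mathcal{S}$, \[h_{A}(f_{i,\infty})\geq h_{A}(f_{j,\infty}),\quad 0\leq i\leq j<\infty,\] and thus \[h^{*}(f_{i,\infty})=h^{*}(f_{j,\infty}),\quad 0\leq i\leq j<\infty.\]
   Context: $f_{0,\infty}$ is equi-continuous if for every $\epsilon>0$ there is $\delta>0$ with $d(x,y)<\delta\Rightarrow d(f_n x,f_n y)<\epsilon$ for all $n$. $f_i^n=f_{i+n-1}\circ\cdots\circ f_i$ ($n\ge1$), $f_i^0=\mathrm{id}$, $f_i^{-n}(B)=(f_i^n)^{-1}(B)$. $\mathcal S$ is the set of strictly increasing sequences $A=\{a_k\}_{k\ge1}$ of nonnegative integers. $h_A(f_{i,\infty})=\sup_{\mathscr A}\limsup_{n\to\infty}\frac1n\log\mathcal N(\bigvee_{k=1}^n f_i^{-a_k}\mathscr A)$ over finite open covers $\mathscr A$ ($\bigvee$ = common refinement, $\mathcal N$ = minimal cardinality of a subcover), and $h^*(f_{i,\infty})=\sup_{A\in\mathcal S}h_A(f_{i,\infty})$. *)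

(* Defs.v *)
From HB Require Import structures.
From mathcomp Require Import all_boot all_order all_algebra.
From mathcomp Require Import all_classical all_reals all_analysis.
Set Implicit Arguments. Unset Strict Implicit. Unset Printing Implicit Defensive.
Import Order.TTheory GRing.Theory Num.Theory.
Local Open Scope classical_set_scope.
Local Open Scope ring_scope.

Section Defs.
Variables (R : realType) (X : metricType R).

Definition equicont (f : nat -> X -> X) : Prop :=
  forall eps : R, 0 < eps -> exists2 delta : R, 0 < delta &
    forall x y : X, mdist x y < delta -> forall n, mdist (f n x) (f n y) < eps.

Definition tailseq (f : nat -> X -> X) (i : nat) : nat -> X -> X :=
  fun n => f (i + n)%N.

Fixpoint fcomp (g : nat -> X -> X) (n : nat) : X -> X :=
  match n with
  | 0 => id
  | n'.+1 => g n' \o fcomp g n'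
  end.

Definition open_cover (m : nat) (U : 'I_m -> set X) : Prop :=
  (forall k, open (U k)) /\ [set: X] `<=` \bigcup_(k in [set: 'I_m]) U k.

(* N(C): minimal cardinality of a finite subcover of the family of sets C
   (0 if there is no finite subcover; never the case in our use) *)
Definition has_subcover_of_size (C : set (set X)) (n : nat) : Prop :=
  exists s : 'I_n -> set X,
    (forall k, C (s k)) /\ [set: X] `<=` \bigcup_(k in [set: 'I_n]) s k.

Definition Ncov (C : set (set X)) : nat :=
  match pselect (exists n, `[< has_subcover_of_size C n >]) with
  | left h => ex_minn h
  | right _ => 0%N
  end.

(* the join  \/_{k=1}^n g_0^{-a_k} U, where the sequence A = {a_k}_{k>=1}
   is represented 0-indexed by a : nat -> nat (a k = a_{k+1}) *)
Definition join_cover (g : nat -> X -> X) (a : nat -> nat) (n m : nat)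
  (U : 'I_m -> set X) : set (set X) :=
  [set S | exists c : 'I_n -> 'I_m,
     S = \bigcap_(k in [set: 'I_n]) (fcomp g (a k) @^-1` U (c k))].

Definition incr_seq (a : nat -> nat) : Prop := forall k, (a k < a k.+1)%N.

Definition hA (g : nat -> X -> X) (a : nat -> nat) : \bar R :=
  ereal_sup [set h | exists m (U : 'I_m -> set X), open_cover U /\
     h = limn_esup (fun n => ((ln (Ncov (join_cover g a n U))%:R / n%:R)%:E))].

Definition hstar (g : nat -> X -> X) : \bar R :=
  ereal_sup [set hA g a | a in incr_seq].

End Defs.

(* Main.v *)
Require Import Defs.
From HB Require Import structures.
From mathcomp Require Import all_boot all_order all_algebra.
From mathcomp Require Import all_classical all_reals all_analysis.
Import Order.TTheory GRing.Theory Num.Theory.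
Local Open Scope classical_set_scope.
Local Open Scope ring_scope.

Section An.
Variable R : realType.
Local Open Scope ereal_scope.

Lemma limn_esupE (u : (\bar R)^nat) : limn_esup u = ereal_inf (range (esups u)).
Proof. rewrite limn_esup_lim; apply: cvg_lim => //; exact: cvg_esups_inf. Qed.

Lemma LS (u v : (\bar R)^nat) K :
  (forall e : R, (0 < e)%R -> exists N, forall n, (N <= n)%N -> u (n + K)%N <= v n + e%:E) ->
  limn_esup u <= limn_esup v.
Proof.
move=> H; rewrite !limn_esupE; apply/lee_addgt0Pr => e e0.
have [N HN] := H e e0.
rewrite -leeBlDr //.
apply: le_ereal_inf_tmp => _ [M _ <-].
rewrite leeBlDr //.
apply: (@le_trans _ _ (esups u (maxn N M + K)%N)).
  by apply: ereal_inf_lbound; exists (maxn N M + K)%N.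
apply: ge_ereal_sup => _ [k /= Hk <-].
have -> : k = ((k - K) + K)%N by rewrite subnK // (leq_trans _ Hk) // leq_addl.
apply: (le_trans (HN _ _)).
  by rewrite (leq_trans (leq_maxl N M)) // leq_subRL ?(leq_trans _ Hk) ?leq_addl // addnC.
rewrite leeD2r //; apply: ereal_sup_ubound; exists (k - K)%N => //=.
by rewrite (leq_trans (leq_maxr N M)) // leq_subRL ?(leq_trans _ Hk) ?leq_addl // addnC.
Qed.
End An.

Section Comb.
Variables (R : realType) (X : metricType R).

Lemma subcover_fin (C : set (set X)) (I : finType) (s : I -> set X) :
  (forall i, C (s i)) -> [set: X] `<=` \bigcup_(i in [set: I]) s i ->
  has_subcover_of_size C #|I|.
Proof.
move=> Cs cov; exists (fun k => s (enum_val k)); split => // x _.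
have [i _ xi] := cov x Logic.I.
by exists (enum_rank i) => //; rewrite enum_rankK.
Qed.

Lemma Ncov_spec (C : set (set X)) n : has_subcover_of_size C n ->
  has_subcover_of_size C (Ncov C) /\ (Ncov C <= n)%N.
Proof.
move=> Hn; rewrite /Ncov; case: pselect => [h|h]; last first.
  by exfalso; apply: h; exists n; apply/asboolP.
case: ex_minnP => k /asboolP Hk Hmin; split => //.
by apply: Hmin; apply/asboolP.
Qed.

Lemma cover_trans (I : finType) (s : I -> set X) (D : set (set X)) (h : X -> X) :
  (forall y, exists x, h x = y) ->
  [set: X] `<=` \bigcup_(i in [set: I]) s i ->
  (forall i, exists T, D T /\ s i `<=` h @^-1` T) -> (Ncov D <= #|I|)%N.
Proof.
move=> hs cov Hi; have [t Ht] := choice Hi.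
have Hc : has_subcover_of_size D #|I|.
  apply: (@subcover_fin D I t (fun i => (Ht i).1)).
  move=> y _; have [x <-] := hs y; have [i _ xi] := cov x Logic.I.
  by exists i => //; apply: (Ht i).2.
exact: (@Ncov_spec D _ Hc).2.
Qed.

Lemma join_has (g : nat -> X -> X) a n m (U : 'I_m -> set X) : open_cover U ->
  has_subcover_of_size (join_cover g a n U) (m ^ n).
Proof.
move=> [_ cov].
have := @subcover_fin (join_cover g a n U) {ffun 'I_n -> 'I_m}
  (fun c => \bigcap_(k in [set: 'I_n]) (fcomp g (a k) @^-1` U (c k))).
rewrite card_ffun !card_ord; apply.
  by move=> c; exists c.
move=> x _.
have : forall k : 'I_n, exists l, U l (fcomp g (a k) x).
  by move=> k; have [l _ ?] := cov (fcomp g (a k) x) Logic.I; exists l.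
move=> /choice [c Hc]; exists (finfun c) => // k _ /=; rewrite ffunE; exact: Hc.
Qed.

End Comb.

Section Geo.
Import metricType_numDomainType.
Variables (R : realType) (X : metricType R).

Lemma mball_open (z : X) (r : R) : open [set y | mdist z y < r].
Proof.
rewrite openE => y /= Hy; rewrite /interior /= -filter_from_mdist_nbhs.
exists (r - mdist z y); first by rewrite subr_gt0.
move=> w /= Hw; apply: (le_lt_trans (metric_triangle z y w)).
by rewrite -ltrBrDl.
Qed.

Lemma seq_lb (r : X -> R) (s : seq X) : (forall z, 0 < r z) ->
  exists2 d, 0 < d & forall z, z \in s -> d <= r z.
Proof.
move=> rp; elim: s => [|z s [d d0 Hd]]; first by exists 1.
exists (Num.min d (r z)); first by rewrite lt_min d0 rp.
move=> w; rewrite inE => /orP [/eqP ->|ws]; first by rewrite ge_min lexx orbT.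
by rewrite ge_min Hd.
Qed.

Lemma compact_fin (f : X -> set X) : compact [set: X] ->
  (forall z, open (f z)) -> (forall z, f z z) ->
  exists s : seq X, forall y, exists2 z, z \in s & f z y.
Proof.
move=> cX fo fz; apply: contrapT => Hn.
have Hs : forall s : seq X, exists y, forall z, z \in s -> ~ f z y.
  move=> s; apply: contrapT => Hy; apply: Hn; exists s => y.
  apply: contrapT => Hz; apply: Hy; exists y => z zs fzy; apply: Hz; by exists z.
pose B := fun s : seq X => [set y | forall z, z \in s -> ~ f z y].
have FF : Filter (filter_from [set: seq X] B).
  apply: filter_from_filter; first by exists [::].
  move=> i j _ _; exists (i ++ j) => // y /= Hy; split => z zs.
    by apply: Hy; rewrite mem_cat zs.
  by apply: Hy; rewrite mem_cat zs orbT.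
have PF : ProperFilter (filter_from [set: seq X] B).
  apply: filter_from_proper => s _; have [y Hy] := Hs s; by exists y.
have [|p [_ clp]] := cX _ PF.
  by exists [::] => // y _.
have nb : nbhs p (f p) by apply: open_nbhs_nbhs; split; [exact: fo|exact: fz].
have [|y [Hy1 Hy2]] := clp (B [:: p]) (f p) _ nb.
  by exists [:: p].
by apply: (Hy1 p) => //; rewrite inE.
Qed.

Lemma refine_cover (F : nat -> X -> X) m (U : 'I_m -> set X) :
  compact [set: X] -> open_cover U ->
  (forall eps, 0 < eps -> exists2 d, 0 < d &
     forall x y, mdist x y < d -> forall s, mdist (F s x) (F s y) < eps) ->
  exists m' (V : 'I_m' -> set X), open_cover V /\
    forall l s, exists k, forall y, V l y -> U k (F s y).
Proof.
move=> cX [Uo Uc] Feq.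
have H1 : forall z, exists rk : R * 'I_m,
    0 < rk.1 /\ [set y | mdist z y < rk.1 + rk.1] `<=` U rk.2.
  move=> z; have [k _ Uz] := Uc z Logic.I.
  have : nbhs z (U k) by apply: open_nbhs_nbhs; split.
  rewrite -filter_from_mdist_nbhs => -[e e0 He].
  exists (e / 2, k); split => /=; first by rewrite divr_gt0.
  by move=> y /= Hy; apply: He; rewrite /= [e in _ < e]splitr.
have [rk Hrk] := choice H1.
pose r z := (rk z).1.
have [s1 Hs1] := @compact_fin (fun z => [set y | mdist z y < r z]) cX
  (fun z => mball_open z (r z)) (fun z => etrans (f_equal (fun t => t < r z) (mdistxx z)) (Hrk z).1).
have [d d0 Hd] := @seq_lb r s1 (fun z => (Hrk z).1).
have [eta eta0 Heta] := Feq d d0.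
have [s2 Hs2] := @compact_fin (fun x => [set y | mdist x y < eta]) cX
  (fun x => mball_open x eta) (fun x => etrans (f_equal (fun t => t < eta) (mdistxx x)) eta0).
exists (size s2), (fun l => [set y | mdist (tnth (in_tuple s2) l) y < eta]).
split; first split.
- by move=> l; exact: mball_open.
- move=> y _; have [x xs Hxy] := Hs2 y.
  have xi : (index x s2 < size s2)%N by rewrite index_mem.
  exists (Ordinal xi) => //=.
  by rewrite (tnth_nth x) /= nth_index.
move=> l s; set x0 := tnth _ l.
have [z zs Hz] := Hs1 (F s x0).
exists (rk z).2 => y Hy; apply: (Hrk z).2 => /=.
apply: (le_lt_trans (metric_triangle z (F s x0) (F s y))).
exact: ltrD Hz (lt_le_trans (Heta _ _ Hy s) (Hd z zs)).
Qed.

End Geo.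

Section Main.
Variables (R : realType) (X : metricType R).
Import metricType_numDomainType.

Lemma fcomp_add (g : nat -> X -> X) a p x :
  fcomp g (a + p) x = fcomp (tailseq g a) p (fcomp g a x).
Proof. by elim: p => [|p IH]; rewrite ?addn0 // addnS /= IH. Qed.

Lemma fcomp_surj (g : nat -> X -> X) p : (forall n y, exists x, g n x = y) ->
  forall y, exists x, fcomp g p x = y.
Proof.
move=> gs; elim: p => [|p IH] y; first by exists y.
have [z <-] := gs p y; have [x <-] := IH z; by exists x.
Qed.

Lemma equicont_fcomp (g : nat -> X -> X) p : equicont g ->
  forall eps, 0 < eps -> exists2 d, 0 < d & forall x y, mdist x y < d ->
    forall s, mdist (fcomp (tailseq g s) p x) (fcomp (tailseq g s) p y) < eps.
Proof.
move=> ge; elim: p => [|p IH] eps e0; first by exists eps.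
have [d1 d10 H1] := ge eps e0; have [d2 d20 H2] := IH d1 d10.
exists d2 => // x y Hxy s /=; apply: H1; exact: H2.
Qed.

Lemma ln_nat_ge0 (b : nat) : 0 <= ln (b%:R : R).
Proof.
case: b => [|b]; first by rewrite ln0.
by apply: ln_ge0; rewrite ler1n.
Qed.

Lemma ln_nat_le (a b : nat) : (a <= b)%N -> ln (a%:R : R) <= ln b%:R.
Proof.
case: a => [|a] H; first by rewrite ln0 // ln_nat_ge0.
by rewrite ler_ln ?posrE ?ltr0n ?ler_nat // (leq_trans _ H).
Qed.

Lemma ln_nat_mul (a b c : nat) : (a <= b * c)%N ->
  ln (a%:R : R) <= ln b%:R + ln c%:R.
Proof.
case: b => [|b]; first by rewrite mul0n leqn0 => /eqP ->; rewrite ln0 // addr_ge0 // ln_nat_ge0.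
case: c => [|c]; first by rewrite muln0 leqn0 => /eqP ->; rewrite ln0 // addr_ge0 // ln_nat_ge0.
move=> H; have H2 := ln_nat_le _ _ H; apply: (le_trans H2).
by rewrite natrM lnM ?posrE ?ltr0n.
Qed.

Lemma part1 (g : nat -> X -> X) p a : compact [set: X] ->
  (forall n y, exists x, g n x = y) -> equicont g ->
  (hA (tailseq g p) a <= hA g a)%E.
Proof.
move=> cX gs ge.
apply: ge_ereal_sup => _ [m [U [Uc ->]]].
have [m' [V [Vc HV]]] := @refine_cover R X (fun s => fcomp (tailseq g s) p) m U cX Uc
  (equicont_fcomp _ p ge).
have Hmem : [set h | exists m (U : 'I_m -> set X), open_cover U /\
     h = limn_esup (fun n => ((@ln R (Ncov (join_cover g a n U))%:R / n%:R)%:E))]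
   (limn_esup (fun n => ((@ln R (Ncov (join_cover g a n V))%:R / n%:R)%:E))).
  by exists m', V.
apply: (le_trans _ (ereal_sup_ubound Hmem)).
apply: (@LS R _ _ 0) => e e0; exists 0%N => n _; rewrite addn0.
have HN : (Ncov (join_cover (tailseq g p) a n U) <= Ncov (join_cover g a n V))%N.
  have [[s2 [s2J s2c]] _] := @Ncov_spec R X _ _ (@join_has R X g a n _ _ Vc).
  rewrite -[X in (_ <= X)%N]card_ord.
  apply: (@cover_trans R X _ s2 _ (fcomp g p) (fcomp_surj _ p gs) s2c).
  move=> i; have [c ->] := s2J i.
  have : forall k : 'I_n, exists l, forall y, V (c k) y -> U l (fcomp (tailseq g (a k)) p y).
    by move=> k; exact: HV.
  move=> /choice [l Hl].
  exists (\bigcap_(k in [set: 'I_n]) (fcomp (tailseq g p) (a k) @^-1` U (l k))).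
  split; first by exists l.
  move=> x /= Hx k _ /=.
  rewrite -fcomp_add addnC fcomp_add; apply: Hl; exact: Hx.
rewrite -EFinD lee_fin.
apply: (@le_trans _ _ (ln (Ncov (join_cover g a n V))%:R / n%:R)).
  by apply: ler_wpM2r; [rewrite invr_ge0|exact: ln_nat_le].
by rewrite lerDl ltW.
Qed.

Lemma incr_ge a : incr_seq a -> forall k, (k <= a k)%N.
Proof. by move=> ai; elim=> // k IH; exact: leq_ltn_trans IH (ai k). Qed.

Lemma count2 (g : nat -> X -> X) p a n m (U : 'I_m -> set X) :
  (forall n y, exists x, g n x = y) -> incr_seq a -> open_cover U ->
  (Ncov (join_cover g a (p + n) U) <=
   m ^ p * Ncov (join_cover (tailseq g p) (fun k => a (p + k) - p)%N n U))%N.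
Proof.
move=> gs ai Uc.
set b := (fun k => _).
have [[s2 [s2J s2c]] _] := @Ncov_spec R X _ _ (@join_has R X (tailseq g p) b n _ _ Uc).
set N2 := Ncov _ in s2J s2c *.
have -> : (m ^ p * N2 = #|{: {ffun 'I_p -> 'I_m} * 'I_N2}|)%N.
  by rewrite card_prod card_ffun !card_ord.
pose s := fun cl : {ffun 'I_p -> 'I_m} * 'I_N2 =>
  (\bigcap_(k in [set: 'I_p]) (fcomp g (a k) @^-1` U (cl.1 k))) `&`
  (fcomp g p @^-1` s2 cl.2).
apply: (@cover_trans R X _ s _ id (fun y => ex_intro _ y erefl)).
  move=> x _.
  have : forall k : 'I_p, exists l, U l (fcomp g (a k) x).
    by move=> k; have [l _ ?] := Uc.2 (fcomp g (a k) x) Logic.I; exists l.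
  move=> /choice [c Hc].
  have [l _ Hl] := s2c (fcomp g p x) Logic.I.
  exists (finfun c, l) => //; split => /=.
    by move=> k _ /=; rewrite ffunE; exact: Hc.
  exact: Hl.
move=> [c1 l]; have [c2 Hc2] := s2J l.
exists (\bigcap_(k in [set: 'I_(p + n)]) (fcomp g (a k) @^-1`
   U (match fintype.split k with inl k1 => c1 k1 | inr k2 => c2 k2 end))).
split; first by eexists.
move=> x [/= H1]; rewrite Hc2 /= => H2 k _ /=.
case: splitP => [k1 Hk|k2 Hk]; rewrite Hk.
  exact: H1.
have := H2 k2 Logic.I; rewrite /= -fcomp_add /b subnKC //.
exact: leq_trans (leq_addr k2 p) (incr_ge _ ai _).
Qed.

Lemma part2 (g : nat -> X -> X) p a :
  (forall n y, exists x, g n x = y) -> incr_seq a ->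
  (hA g a <= hA (tailseq g p) (fun k => a (p + k) - p)%N)%E.
Proof.
move=> gs ai.
apply: ge_ereal_sup => _ [m [U [Uc ->]]].
pose b := (fun k => a (p + k) - p)%N.
have Hmem : [set h | exists m (U : 'I_m -> set X), open_cover U /\
     h = limn_esup (fun n => ((@ln R (Ncov (join_cover (tailseq g p) b n U))%:R / n%:R)%:E))]
   (limn_esup (fun n => ((@ln R (Ncov (join_cover (tailseq g p) b n U))%:R / n%:R)%:E))).
  by exists m, U.
apply: (le_trans _ (ereal_sup_ubound Hmem)).
apply: (@LS R _ _ p) => e e0.
set C := ln ((m ^ p)%:R : R).
have C0 : 0 <= C by exact: ln_nat_ge0.
exists (Num.Def.trunc (C / e)).+1 => n Hn.
have n0 : (0 < n)%N by apply: leq_trans Hn.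
have HN := @count2 g p a n m U gs ai Uc.
rewrite addnC -EFinD lee_fin.
set N2 := Ncov (join_cover (tailseq g p) b n U) in HN *.
have L := ln_nat_mul _ _ _ HN.
have N20 := ln_nat_ge0 N2.
have Hq : (0 < (n%:R : R)) by rewrite ltr0n.
have Hpn : (0 < ((p + n)%:R : R)) by rewrite ltr0n addn_gt0 n0 orbT.
apply: (@le_trans _ _ ((C + ln N2%:R) / n%:R)).
  apply: (@le_trans _ _ ((C + ln N2%:R) / (p + n)%:R)).
    by apply: ler_wpM2r; [rewrite invr_ge0 ltW|].
  apply: ler_wpM2l; first exact: addr_ge0.
  by rewrite lef_pV2 ?posrE // ler_nat leq_addl.
rewrite mulrDl addrC lerD2l.
have Ht := truncnS_gt (C / e).
apply: (@le_trans _ _ (C / ((Num.Def.trunc (C / e)).+1)%:R)).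
  apply: ler_wpM2l => //.
  by rewrite lef_pV2 ?posrE ?ltr0n // ler_nat.
rewrite ler_pdivrMr ?ltr0n // mulrC -ler_pdivrMr //.
exact: ltW.
Qed.

End Main.

Lemma tailseq_add (R : realType) (X : metricType R) (f : nat -> X -> X) i p :
  tailseq f (i + p) = tailseq (tailseq f i) p.
Proof. by apply/funext => n; rewrite /tailseq addnA. Qed.

Theorem proposition4p6 (R : realType) (X : metricType R) (f : nat -> X -> X) :
  compact [set: X] ->
  (forall n, continuous (f n)) ->
  (forall n (y : X), exists x : X, f n x = y) ->
  equicont f ->
  (forall a : nat -> nat, incr_seq a ->
     forall i j : nat, (i <= j)%N ->
       (hA (tailseq f j) a <= hA (tailseq f i) a)%E) /\
  (forall i j : nat, (i <= j)%N -> hstar (tailseq f i) = hstar (tailseq f j)).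
Proof.
move=> cX _ fs fe.
have ts : forall i n (y : X), exists x, tailseq f i n x = y.
  by move=> i n y; exact: fs.
have te : forall i, equicont (tailseq f i).
  move=> i e e0; have [d d0 Hd] := fe e e0; exists d => // x y Hxy n.
  exact: Hd.
have P1 : forall a i j, (i <= j)%N -> (hA (tailseq f j) a <= hA (tailseq f i) a)%E.
  move=> a i j ij; rewrite -(subnKC ij) tailseq_add.
  exact: part1.
split; first by move=> a _; exact: P1.
move=> i j ij; apply/eqP; rewrite eq_le; apply/andP; split.
  apply: ge_ereal_sup => _ [a ai <-].
  have H := @part2 R X (tailseq f i) (j - i) a (ts i) ai.
  rewrite -tailseq_add subnKC // in H.
  apply: (le_trans H); apply: ereal_sup_ubound; eexists; last reflexivity.
  move=> k /=; rewrite addnS; apply: ltn_sub2r; last exact: ai.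
  by apply: (leq_trans _ (incr_ge _ ai _)); rewrite ltnS leq_addr.
apply: ge_ereal_sup => _ [a ai <-].
apply: (le_trans (P1 a i j ij)); apply: ereal_sup_ubound; by exists a.
Qed.
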